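(* For all $e,f\in\mathrm{Exp}$, if $e\sim f$ then $e\mathrel{\dot\equiv}f$.
   Context: Fix a finite set $T$ of primitive tests, a set $\mathrm{Act}$ of atomic actions, a set $\mathrm{Out}$ of return values, and a semiring $(S,+,\cdot,0,1)$ that is positive ($x+y=0\Rightarrow x=y=0$), refinement (whenever $x+y=z+w$ there exist $s,t,u,v$ with $s+t=x$, $s+u=z$, $u+v=y$, $t+v=w$) and Conway (with ${}^*:S\to S$ satisfying $(a+b)^*=a^*(ba^* )^*$, $(ab)^*=1+a(ba)^*b$). Tests: $b,c\in\mathrm{BExp}::=\mathtt{0}\mid\mathtt{1}\mid t\ (t\in T)\mid\bar b\mid b+c\mid bc$ ($\mathtt 0,\mathtt 1$ false/true, distinct from semiring $0,1$); $\equiv_{BA}$ is Boolean equivalence; $\mathrm{At}$ is the finite set of atoms of the free Boolean algebra on $T$, atoms also regarded as tests; $\alpha\le b$ means $\alpha$ entails $b$. Expressions: $e,f\in\mathrm{Exp}::= p\in\mathrm{Act}\mid b\in\mathrm{BExp}\mid e+_b f\mid e;f\mid e^{(b)}\mid v\in\mathrm{Out}\mid e\oplus_{r,s} f\ (r,s\in S)$; $\odot r:=\mathtt 1\oplus_{r,0}\mathtt 0$. $\mathcal M_\omega(X)$: finitely supported maps $X\to S$, pointwise operations; $\delta_x$ indicator of $x$; $\nu[A]=\sum_{x\in A}\nu(x)$. A wGKAT automaton is $(X,\beta)$ with $\beta:X\to\mathcal M_\omega(\{\mathsf{acc},\mathsf{rej}\}+\mathrm{Out}+\mathrm{Act}\times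 X)^{\mathrm{At}}$. A map $h:X\to Y$ between automata $(X,\beta),(Y,\gamma)$ is a homomorphism if for all $x,\alpha$: $\gamma(h(x))_\alpha(o)=\beta(x)_\alpha(o)$ for $o\in\{\mathsf{acc},\mathsf{rej}\}+\mathrm{Out}$, and $\gamma(h(x))_\alpha(p,y)=\beta(x)_\alpha[\{p\}\times h^{-1}(y)]$. A relation $R\subseteq X\times Y$ is a bisimulation if there is $\rho:R\to\mathcal M_\omega(\{\mathsf{acc},\mathsf{rej}\}+\mathrm{Out}+\mathrm{Act}\times R)^{\mathrm{At}}$ making both projections homomorphisms from $(R,\rho)$; $e\sim f$ means some bisimulation on $(\mathrm{Exp},\partial)$ contains $(e,f)$. The derivative automaton: $\partial(b)_\alpha=\delta_{\mathsf{acc}}$ if $\alpha\le b$, else $\delta_{\mathsf{rej}}$; $\partial(v)_\alpha=\delta_v$; $\partial(p)_\alpha=\delta_{(p,\mathtt 1)}$; $\partial(e+_bf)_\alpha=\partial(e)_\alpha$ if $\alpha\le b$, else $\partial(f)_\alpha$; $\partial(e\oplus_{r,s}f)_\alpha=r\partial(e)_\alpha+s\partial(f)_\alpha$; $\partial(e;f)_\alpha=\sum_x\partial(e)_\alpha(x)c_{\alpha,f}(x)$ with $c_{\alpha,f}(\mathsf{acc})=\partial(f)_\alpha$, $c_{\alpha,f}(x)=\delta_x$ for $x\in\{\mathsf{rej}\}\cup\mathrm{Out}$, $c_{\alpha,f}(p,e')=\delta_{(p,e';f)}$; $\partial(e^{(b)})_\alpha(x)$ is $1$ if $x=\mathsf{acc}$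 and $\alpha\le\bar b$; $\partial(e)_\alpha(\mathsf{acc})^*\partial(e)_\alpha(x)$ if $x\in\{\mathsf{rej}\}\cup\mathrm{Out}$ and $\alpha\le b$; $\partial(e)_\alpha(\mathsf{acc})^*\partial(e)_\alpha(p,e')$ if $x=(p,e';e^{(b)})$ and $\alpha\le b$; $0$ otherwise. $E:\mathrm{Exp}\to S^{\mathrm{At}}$: $E(p)_\alpha=E(v)_\alpha=0$; $E(b)_\alpha=1$ if $\alpha\le b$ else $0$; $E(e\oplus_{r,s}f)_\alpha=rE(e)_\alpha+sE(f)_\alpha$; $E(e+_bf)_\alpha=E(e)_\alpha$ if $\alpha\le b$ else $E(f)_\alpha$; $E(e;f)_\alpha=E(e)_\alpha E(f)_\alpha$; $E(e^{(b)})_\alpha=E(\bar b)_\alpha$. The relation $\equiv$ is the smallest congruence on $\mathrm{Exp}$ (tests taken up to $\equiv_{BA}$; sequencing binds tighter than $\oplus$, $\odot$ binds tightest) containing, for all $e,f,g\in\mathrm{Exp}$, tests $b,c$, $v\in\mathrm{Out}$, $r,s,t,u\in S$: (G1) $e+_be\equiv e$; (G2) $e+_bf\equiv b;e+_bf$; (G3) $e+_bf\equiv f+_{\bar b}e$; (G4) $(e+_bf)+_cg\equiv e+_{bc}(f+_cg)$; (D1) $e\oplus_{r,s}(f+_bg)\equiv(e\oplus_{r,s}f)+_b(e\oplus_{r,s}g)$; (D2) $e\oplus_{r,s}(f\oplus_{t,u}g)\equiv e\oplus_{r,1}(f\oplus_{st,su}g)$; (D3) $b;(e\oplus_{r,s}f)\equiv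 b;(b;e\oplus_{r,s}b;f)$; (S1) $\mathtt 1;e\equiv e\equiv e;\mathtt 1$; (S2) $(e;f);g\equiv e;(f;g)$; (S3) $\mathtt 0;e\equiv\mathtt 0$; (S4) $(e\oplus_{r,s}f);g\equiv e;g\oplus_{r,s}f;g$; (S5) $(e+_bf);g\equiv e;g+_bf;g$; (S6) $v;e\equiv v$; (S7) $b;c\equiv bc$; (L1) $e^{(b)}\equiv e;e^{(b)}+_b\mathtt 1$; (C1) $\odot1\equiv\mathtt 1$; (C2) $\odot0;e\equiv\odot0$; (W1) $e\oplus_{r,s}e\equiv\odot(r+s);e$; (W2) $e\oplus_{r,s}f\equiv f\oplus_{s,r}e$; (W3) $e\oplus_{r,s}(f\oplus_{t,u}g)\equiv(e\oplus_{r,st}f)\oplus_{1,su}g$; (W4) $e\oplus_{ru,s}f\equiv(\odot u;e)\oplus_{r,s}f$; and closed under the rules (L2) if $e\equiv(f\oplus_{r,s}\mathtt 1)+_cg$ then $c;e^{(b)}\equiv c;((\odot(s^*r);f;e^{(b)})+_b\mathtt 1)$; (F1) if $g\equiv e;g+_bf$ and $E(e)_\alpha=0$ for all $\alpha\in\mathrm{At}$ then $g\equiv e^{(b)};f$. Systems of equations: for a finite set $X$ of indeterminates, a term over $X$ is a generalized guarded sum $\mathrm{GS}_{\alpha\in\mathrm{At}}w_\alpha$ (where $\mathrm{GS}_{\alpha\in\emptyset}:=\mathtt 0$ and $\mathrm{GS}_{\alpha\in\Phi}w_\alpha:=w_\gamma+_\gamma\mathrm{GS}_{\alpha\in\Phi\setminus\{\gamma\}}w_\alpha$)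 of weighted sums $w_\alpha=\bigoplus_{i\in I}r_i\cdot t_i$ (with $I$ finite, $\bigoplus_{i\in I}r_i\cdot t_i:=t_j\oplus_{r_j,1}\bigoplus_{i\in I\setminus\{j\}}r_i\cdot t_i$, empty sum $\odot0$), where each $t_i$ is either an expression $f\in\mathrm{Exp}$ or a formal product $g\,x$ with $g\in\mathrm{Exp}$, $x\in X$. A system is $(X,\tau)$ with $X$ finite and $\tau$ assigning a term to each $x\in X$; it is Salomaa if every $g$ occurring in a subterm $g\,x$ of any $\tau(x)$ satisfies $E(g)_\alpha=0$ for all $\alpha$. For $h:X\to\mathrm{Exp}$, $h^\#$ maps a term to the expression obtained by replacing each $g\,x$ by $g;h(x)$. For a congruence $R$, $h$ is a solution up to $R$ if $(h(x),h^\#(\tau(x)))\in R$ for all $x$. Let $\dot\equiv$ be the least congruence containing $\equiv$ and closed under the rule (UA): if $(X,\tau)$ is a Salomaa system and $f,g:X\to\mathrm{Exp}$ are both solutions of $(X,\tau)$ up to $\dot\equiv$, then $f(x)\mathrel{\dot\equiv}g(x)$ for all $x\in X$. *)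

(* Defs.v *)
From HB Require Import structures.
From mathcomp Require Import all_boot all_order all_algebra.
From mathcomp Require Import boolp classical_sets cardinality fsbigop.
From Stdlib Require List.
Set Implicit Arguments. Unset Strict Implicit. Unset Printing Implicit Defensive.
Import GRing.Theory.
Local Open Scope ring_scope.
Local Open Scope classical_set_scope.

Section WGKAT.
Variables (T : finType) (Act Out : Type) (S : pzSemiRingType).

Inductive bexp : Type :=
| BZero | BOne | BPrim (t : T) | BNeg (b : bexp)
| BPlus (b c : bexp) | BAnd (b c : bexp).

(* Atoms of the free Boolean algebra on T = valuations T -> bool. *)
Definition atom : finType := {ffun T -> bool}.

Fixpoint beval (a : atom) (b : bexp) : bool :=
  match b with
  | BZero => false | BOne => true | BPrim t => a t
  | BNeg b => ~~ beval a b
  | BPlus b c => beval a b || beval a c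
  | BAnd b c => beval a b && beval a c
  end.

Definition ale (a : atom) (b : bexp) : bool := beval a b.

Definition bequiv (b c : bexp) : Prop := forall a : atom, beval a b = beval a c.

Definition atom_test (a : atom) : bexp :=
  foldr (fun t acc => BAnd (if a t then BPrim t else BNeg (BPrim t)) acc)
        BOne (enum T).

Inductive exp : Type :=
| EAct (p : Act)
| ETest (b : bexp)
| EIf (e : exp) (b : bexp) (f : exp)
| ESeq (e f : exp)
| ELoop (e : exp) (b : bexp)
| ERet (v : Out)
| EChoice (e : exp) (r s : S) (f : exp).

Definition odot (r : S) : exp := EChoice (ETest BOne) r 0 (ETest BZero).

Inductive obs (X : Type) : Type :=
| Acc | Rej | Ret (v : Out) | Tr (p : Act) (x : X).
Arguments Acc {X}. Arguments Rej {X}. Arguments Ret {X}. Arguments Tr {X}.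

(* finitely supported weightings M_omega(Y) are functions Y -> S with finite
   support; nu[A] = sum of nu over A *)
Definition fin_supp (Y : Type) (nu : Y -> S) : Prop :=
  finite_set [set y | nu y <> 0].

Definition mass (Y : Type) (nu : Y -> S) (A : set Y) : S :=
  \sum_(y \in (A : set {classic Y})) nu y.

Definition dirac (Y : Type) (y : Y) : Y -> S :=
  fun z => if `[< z = y >] then 1 else 0.

(* wGKAT automaton (X, beta): beta : X -> M_omega(obs X)^At *)
Definition wautomaton (X : Type) := X -> atom -> obs X -> S.

Definition is_wautomaton (X : Type) (beta : wautomaton X) : Prop :=
  forall x a, fin_supp (beta x a).

Definition homomorphism (X Y : Type) (beta : wautomaton X) (gamma : wautomaton Y)
  (h : X -> Y) : Prop :=
  forall (x : X) (a : atom),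
    [/\ gamma (h x) a Acc = beta x a Acc,
        gamma (h x) a Rej = beta x a Rej,
        (forall v, gamma (h x) a (Ret v) = beta x a (Ret v)) &
        (forall p y, gamma (h x) a (Tr p y) =
           mass (beta x a) [set z | exists x', z = Tr p x' /\ h x' = y])].

Definition bisimulation (X Y : Type) (beta : wautomaton X) (gamma : wautomaton Y)
  (R : X -> Y -> Prop) : Prop :=
  exists rho : wautomaton {xy : X * Y | R xy.1 xy.2},
    [/\ is_wautomaton rho,
        homomorphism rho beta (fun z => (proj1_sig z).1) &
        homomorphism rho gamma (fun z => (proj1_sig z).2)].

Variable star : S -> S.

Definition cont (df : obs exp -> S) (f : exp) (x : obs exp) : obs exp -> S :=
  match x with
  | Acc => df
  | Rej => dirac Rej
  | Ret v => dirac (Ret v)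
  | Tr p e' => dirac (Tr p (ESeq e' f))
  end.

Fixpoint deriv (e : exp) (a : atom) {struct e} : obs exp -> S :=
  match e with
  | ETest b => dirac (if ale a b then Acc else Rej)
  | ERet v => dirac (Ret v)
  | EAct p => dirac (Tr p (ETest BOne))
  | EIf e1 b e2 => if ale a b then deriv e1 a else deriv e2 a
  | EChoice e1 r s e2 => fun y => r * deriv e1 a y + s * deriv e2 a y
  | ESeq e1 e2 =>
      let d1 := deriv e1 a in let d2 := deriv e2 a in
      fun y => \sum_(x \in (setT : set {classic (obs exp)})) d1 x * cont d2 e2 x y
  | ELoop e1 b =>
      let d1 := deriv e1 a in
      fun y =>
        if ale a b then
          match y with
          | Acc => 0
          | Rej => star (d1 Acc) * d1 Rej
          | Ret v => star (d1 Acc) * d1 (Ret v)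
          | Tr p g =>
              match g with
              | ESeq e' k => if `[< k = ELoop e1 b >]
                             then star (d1 Acc) * d1 (Tr p e') else 0
              | _ => 0
              end
          end
        else (match y with Acc => 1 | _ => 0 end)
  end.

Definition bisimilar (e f : exp) : Prop :=
  exists R : exp -> exp -> Prop, bisimulation deriv deriv R /\ R e f.

Fixpoint Efun (e : exp) (a : atom) : S :=
  match e with
  | EAct _ => 0 | ERet _ => 0
  | ETest b => if ale a b then 1 else 0
  | EChoice e1 r s e2 => r * Efun e1 a + s * Efun e2 a
  | EIf e1 b e2 => if ale a b then Efun e1 a else Efun e2 a
  | ESeq e1 e2 => Efun e1 a * Efun e2 a
  | ELoop _ b => if ale a (BNeg b) then 1 else 0
  end.

Inductive eqv : exp -> exp -> Prop :=
| eqv_refl e : eqv e e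
| eqv_sym e f : eqv e f -> eqv f e
| eqv_trans e f g : eqv e f -> eqv f g -> eqv e g
| eqv_if e e' f f' b : eqv e e' -> eqv f f' -> eqv (EIf e b f) (EIf e' b f')
| eqv_seq e e' f f' : eqv e e' -> eqv f f' -> eqv (ESeq e f) (ESeq e' f')
| eqv_loop e e' b : eqv e e' -> eqv (ELoop e b) (ELoop e' b)
| eqv_choice e e' f f' r s : eqv e e' -> eqv f f' ->
    eqv (EChoice e r s f) (EChoice e' r s f')
| eqv_test_ba b c : bequiv b c -> eqv (ETest b) (ETest c)
| eqv_if_ba e f b c : bequiv b c -> eqv (EIf e b f) (EIf e c f)
| eqv_loop_ba e b c : bequiv b c -> eqv (ELoop e b) (ELoop e c)
| eqv_G1 e b : eqv (EIf e b e) e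
| eqv_G2 e f b : eqv (EIf e b f) (EIf (ESeq (ETest b) e) b f)
| eqv_G3 e f b : eqv (EIf e b f) (EIf f (BNeg b) e)
| eqv_G4 e f g b c : eqv (EIf (EIf e b f) c g) (EIf e (BAnd b c) (EIf f c g))
| eqv_D1 e f g b r s :
    eqv (EChoice e r s (EIf f b g)) (EIf (EChoice e r s f) b (EChoice e r s g))
| eqv_D2 e f g r s t u :
    eqv (EChoice e r s (EChoice f t u g)) (EChoice e r 1 (EChoice f (s * t) (s * u) g))
| eqv_D3 e f b r s :
    eqv (ESeq (ETest b) (EChoice e r s f))
        (ESeq (ETest b) (EChoice (ESeq (ETest b) e) r s (ESeq (ETest b) f)))
| eqv_S1l e : eqv (ESeq (ETest BOne) e) e
| eqv_S1r e : eqv e (ESeq e (ETest BOne))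
| eqv_S2 e f g : eqv (ESeq (ESeq e f) g) (ESeq e (ESeq f g))
| eqv_S3 e : eqv (ESeq (ETest BZero) e) (ETest BZero)
| eqv_S4 e f g r s : eqv (ESeq (EChoice e r s f) g) (EChoice (ESeq e g) r s (ESeq f g))
| eqv_S5 e f g b : eqv (ESeq (EIf e b f) g) (EIf (ESeq e g) b (ESeq f g))
| eqv_S6 v e : eqv (ESeq (ERet v) e) (ERet v)
| eqv_S7 b c : eqv (ESeq (ETest b) (ETest c)) (ETest (BAnd b c))
| eqv_L1 e b : eqv (ELoop e b) (EIf (ESeq e (ELoop e b)) b (ETest BOne))
| eqv_C1 : eqv (odot 1) (ETest BOne)
| eqv_C2 e : eqv (ESeq (odot 0) e) (odot 0)
| eqv_W1 e r s : eqv (EChoice e r s e) (ESeq (odot (r + s)) e)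
| eqv_W2 e f r s : eqv (EChoice e r s f) (EChoice f s r e)
| eqv_W3 e f g r s t u :
    eqv (EChoice e r s (EChoice f t u g)) (EChoice (EChoice e r (s * t) f) 1 (s * u) g)
| eqv_W4 e f r s u : eqv (EChoice e (r * u) s f) (EChoice (ESeq (odot u) e) r s f)
| eqv_L2 e f g b c r s :
    eqv e (EIf (EChoice f r s (ETest BOne)) c g) ->
    eqv (ESeq (ETest c) (ELoop e b))
        (ESeq (ETest c) (EIf (ESeq (odot (star s * r)) (ESeq f (ELoop e b))) b (ETest BOne)))
| eqv_F1 e f g b :
    eqv g (EIf (ESeq e g) b f) -> (forall a, Efun e a = 0) ->
    eqv g (ESeq (ELoop e b) f).

Inductive summand (X : Type) : Type :=
| SExp (f : exp)
| SVar (g : exp) (x : X).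

(* a term: for each atom alpha a weighted sum w_alpha = (+)_{i in I} r_i . t_i,
   given as the finite list of pairs (r_i, t_i) *)
Definition term (X : Type) := atom -> seq (S * summand X).

Definition inst (X : Type) (h : X -> exp) (t : summand X) : exp :=
  match t with SExp f => f | SVar g x => ESeq g (h x) end.

Fixpoint wsumE (l : seq (S * exp)) : exp :=
  match l with
  | [::] => odot 0
  | (r, t) :: l' => EChoice t r 1 (wsumE l')
  end.

Definition gsum (w : atom -> exp) : exp :=
  foldr (fun a acc => EIf (w a) (atom_test a) acc) (ETest BZero) (enum atom).

Definition hsharp (X : Type) (h : X -> exp) (t : term X) : exp :=
  gsum (fun a => wsumE [seq (rt.1, inst h rt.2) | rt <- t a]).

Definition salomaa (X : finType) (tau : X -> term X) : Prop :=
  forall x a r g y, List.In (r, SVar g y) (tau x a) -> forall a', Efun g a' = 0.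

Definition solution_upto (R : exp -> exp -> Prop) (X : finType) (tau : X -> term X)
  (h : X -> exp) : Prop :=
  forall x, R (h x) (hsharp h (tau x)).

Inductive deqv : exp -> exp -> Prop :=
| deqv_base e f : eqv e f -> deqv e f
| deqv_refl e : deqv e e
| deqv_sym e f : deqv e f -> deqv f e
| deqv_trans e f g : deqv e f -> deqv f g -> deqv e g
| deqv_if e e' f f' b : deqv e e' -> deqv f f' -> deqv (EIf e b f) (EIf e' b f')
| deqv_seq e e' f f' : deqv e e' -> deqv f f' -> deqv (ESeq e f) (ESeq e' f')
| deqv_loop e e' b : deqv e e' -> deqv (ELoop e b) (ELoop e' b)
| deqv_choice e e' f f' r s : deqv e e' -> deqv f f' ->
    deqv (EChoice e r s f) (EChoice e' r s f')
| deqv_UA (X : finType) (tau : X -> term X) (f g : X -> exp) :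
    salomaa tau ->
    (forall x, deqv (f x) (hsharp f (tau x))) ->
    (forall x, deqv (g x) (hsharp g (tau x))) ->
    forall x, deqv (f x) (g x).

End WGKAT.

Arguments Acc {Act Out X}. Arguments Rej {Act Out X}.
Arguments Ret {Act Out X}. Arguments Tr {Act Out X}.

(* Main.v *)
Require Import Defs.
From HB Require Import structures.
From mathcomp Require Import all_boot all_order all_algebra.
From mathcomp Require Import boolp classical_sets functions cardinality fsbigop.
From Stdlib Require Import Setoid Morphisms.
Set Implicit Arguments. Unset Strict Implicit. Unset Printing Implicit Defensive.
Import GRing.Theory.
Local Open Scope ring_scope.

Section Part.
Variables (T : finType) (Act Out : Type) (S : pzSemiRingType) (star : S -> S).
Local Notation exp := (exp T Act Out S).
Local Notation bexp := (bexp T).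
Local Notation tst b := (ETest Act Out S b).
Local Notation E1 := (ETest Act Out S (BOne T)).
Local Notation E0 := (ETest Act Out S (BZero T)).
Local Notation D := (@eqv T Act Out S star).
Local Notation "e ≈ f" := (D e f) (at level 70).
Local Notation "x ;; y" := (ESeq x y) (at level 45, right associativity).

Instance deqv_Equiv : Equivalence D.
Proof. split; [exact: eqv_refl | exact: eqv_sym | exact: eqv_trans]. Qed.
Instance EIf_Proper : Proper (D ==> eq ==> D ==> D) (@EIf T Act Out S).
Proof. by move=> ? ? H ? ? -> ? ? H'; apply: eqv_if. Qed.
Instance ESeq_Proper : Proper (D ==> D ==> D) (@ESeq T Act Out S).
Proof. by move=> ? ? H ? ? H'; apply: eqv_seq. Qed.
Instance EChoice_Proper : Proper (D ==> eq ==> eq ==> D ==> D) (@EChoice T Act Out S).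
Proof. by move=> ? ? H ? ? -> ? ? -> ? ? H'; apply: eqv_choice. Qed.
Instance ELoop_Proper : Proper (D ==> eq ==> D) (@ELoop T Act Out S).
Proof. by move=> ? ? H ? ? ->; apply: eqv_loop. Qed.

Hint Resolve eqv_refl : core.
Ltac ax H := eapply H.

Lemma tst_eq (b c : bexp) : (forall a, beval a b = beval a c) -> tst b ≈ tst c.
Proof. by move=> H; ax eqv_test_ba. Qed.
Lemma if_ba e f (b c : bexp) : (forall a, beval a b = beval a c) -> EIf e b f ≈ EIf e c f.
Proof. by move=> H; ax eqv_if_ba. Qed.

Lemma seqA e f g : (e ;; f) ;; g ≈ e ;; (f ;; g).
Proof. ax eqv_S2. Qed.
Lemma tst_seq (b c : bexp) e : tst b ;; (tst c ;; e) ≈ tst (BAnd b c) ;; e.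
Proof. by rewrite -seqA; apply: eqv_seq; [ax eqv_S7|]. Qed.
Lemma zero_seq e : E0 ;; e ≈ E0.
Proof. ax eqv_S3. Qed.
Lemma one_seq e : E1 ;; e ≈ e.
Proof. ax eqv_S1l. Qed.
Lemma seq_one e : e ;; E1 ≈ e.
Proof. symmetry; ax eqv_S1r. Qed.
Lemma tst0_seq (b : bexp) e : (forall a, ~~ beval a b) -> tst b ;; e ≈ E0.
Proof. by move=> H; rewrite (tst_eq (c := BZero T)) ?zero_seq // => a; rewrite (negbTE (H a)). Qed.
Lemma G1 e b : EIf e b e ≈ e.
Proof. ax eqv_G1. Qed.
Lemma G2 e f b : EIf e b f ≈ EIf (tst b ;; e) b f.
Proof. ax eqv_G2. Qed.
Lemma G3 e f b : EIf e b f ≈ EIf f (BNeg b) e.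
Proof. ax eqv_G3. Qed.
Lemma G4 e f g b c : EIf (EIf e b f) c g ≈ EIf e (BAnd b c) (EIf f c g).
Proof. ax eqv_G4. Qed.

Lemma if_false e f (b : bexp) : (forall a, ~~ beval a b) -> EIf e b f ≈ f.
Proof.
move=> H; rewrite G2 tst0_seq //.
by rewrite -{2}(G1 f b) [EIf f b f]G2 tst0_seq.
Qed.
Lemma if_true e f (b : bexp) : (forall a, beval a b) -> EIf e b f ≈ e.
Proof. by move=> H; rewrite G3 if_false // => a /=; rewrite H. Qed.

Lemma if_then e e' f (b : bexp) : tst b ;; e ≈ tst b ;; e' -> EIf e b f ≈ EIf e' b f.
Proof. by move=> H; rewrite G2 H -G2. Qed.
Lemma if_else e f f' (b : bexp) : tst (BNeg b) ;; f ≈ tst (BNeg b) ;; f' -> EIf e b f ≈ EIf e b f'.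
Proof. by move=> H; rewrite G3 (if_then _ H) -G3. Qed.

Lemma tst_tst0 (b : bexp) : tst b ;; E0 ≈ E0.
Proof. transitivity (tst (BAnd b (BZero T))); first by ax eqv_S7.
by apply: tst_eq => a /=; rewrite andbF. Qed.

Lemma tst_seq_if (b : bexp) e : tst b ;; e ≈ EIf e b E0.
Proof.
transitivity (EIf (tst b ;; e) b (tst b ;; e)); first by rewrite G1.
rewrite (G2 e E0 b); apply: if_else; rewrite tst_tst0 tst_seq tst0_seq // => a /=.
by rewrite andNb.
Qed.

Lemma push_t (c b : bexp) x y : (forall a, beval a c -> beval a b) ->
  tst c ;; EIf x b y ≈ tst c ;; x.
Proof.
move=> H; rewrite !tst_seq_if G4 (if_ba _ _ (c := c)); last first.
  by move=> a /=; case E: (beval a c); rewrite ?andbF // (H _ E).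
apply: if_else; rewrite tst_tst0 tst_seq_if G4 if_false ?G1 // => a /=.
by rewrite andbN.
Qed.

Lemma push_f (c b : bexp) x y : (forall a, beval a c -> ~~ beval a b) ->
  tst c ;; EIf x b y ≈ tst c ;; y.
Proof.
move=> H; rewrite !tst_seq_if G4 if_false // => a /=.
by case E: (beval a c); rewrite ?andbF // (negbTE (H _ E)).
Qed.


Lemma beval_atom (b a : atom T) : beval b (atom_test a) = (b == a).
Proof.
rewrite /atom_test.
have -> : forall l, beval b (foldr (fun t acc => BAnd (if a t then BPrim t else BNeg (BPrim t)) acc)
   (BOne T) l) = all (fun t => b t == a t) l.
  by elim=> //= t l ->; case: (a t) => /=; rewrite ?eqb_id ?eqbF_neg.
apply/idP/eqP => [/allP H|->]; last by apply/allP => t _.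
by apply/ffunP => t; apply/eqP/H; rewrite mem_enum.
Qed.

Lemma split_t (c b : bexp) e f :
  tst (BAnd c b) ;; e ≈ tst (BAnd c b) ;; f ->
  tst (BAnd c (BNeg b)) ;; e ≈ tst (BAnd c (BNeg b)) ;; f ->
  tst c ;; e ≈ tst c ;; f.
Proof.
move=> H1 H2.
transitivity (EIf (tst c ;; e) b (tst c ;; e)); first by rewrite G1.
transitivity (EIf (tst c ;; f) b (tst c ;; f)); last by rewrite G1.
have E1' : forall g, tst b ;; tst c ;; g ≈ tst (BAnd c b) ;; g.
  by move=> g; rewrite tst_seq; apply: eqv_seq => //; apply: tst_eq => a /=; rewrite andbC.
have E2' : forall g, tst (BNeg b) ;; tst c ;; g ≈ tst (BAnd c (BNeg b)) ;; g.
  by move=> g; rewrite tst_seq; apply: eqv_seq => //; apply: tst_eq => a /=; rewrite andbC.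
transitivity (EIf (tst c ;; f) b (tst c ;; e)).
  by apply: if_then; rewrite !E1'.
by apply: if_else; rewrite !E2'.
Qed.

Definition ctest (l : seq (atom T)) : bexp :=
  foldr (fun a acc => BPlus (atom_test a) acc) (BZero T) l.

Lemma beval_ctest b l : beval b (ctest l) = (b \in l).
Proof. by elim: l => //= a l ->; rewrite beval_atom in_cons. Qed.

Lemma atomwise e f : (forall a, tst (atom_test a) ;; e ≈ tst (atom_test a) ;; f) -> e ≈ f.
Proof.
move=> H.
suff: forall l, tst (BNeg (ctest l)) ;; e ≈ tst (BNeg (ctest l)) ;; f -> e ≈ f.
  move/(_ (enum (atom T))); apply.
  by rewrite !tst0_seq // => a /=; rewrite beval_ctest mem_enum.
elim=> [|a l IH] /= H0.
  rewrite -(one_seq e) -(one_seq f).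
  transitivity (tst (BNeg (BZero T)) ;; e); first by apply: eqv_seq => //; apply: tst_eq.
  rewrite H0; apply: eqv_seq => //; exact: tst_eq.
apply: IH; apply: (split_t (b := atom_test a)).
  case: (boolP (a \in l)) => al.
    have Z : forall x, ~~ beval x (BAnd (BNeg (ctest l)) (atom_test a)).
      move=> x /=; rewrite beval_ctest beval_atom.
      by case: eqP => [->|]; rewrite ?al ?andbF.
    by rewrite !tst0_seq.
  transitivity (tst (atom_test a) ;; e).
    apply: eqv_seq => //; apply: tst_eq => x /=; rewrite beval_ctest beval_atom.
    by case: eqP => [->|]; rewrite ?(negbTE al) ?andbF.
  rewrite H; apply: eqv_seq => //; apply: tst_eq => x /=; rewrite beval_ctest beval_atom.
  by case: eqP => [->|]; rewrite ?(negbTE al) ?andbF.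
transitivity (tst (BNeg (BPlus (atom_test a) (ctest l))) ;; e).
  by apply: eqv_seq => //; apply: tst_eq => x /=; rewrite negb_or andbC.
rewrite H0; apply: eqv_seq => //; apply: tst_eq => x /=; by rewrite negb_or andbC.
Qed.

Lemma gsum_at (w : atom T -> exp) a : tst (atom_test a) ;; gsum w ≈ tst (atom_test a) ;; w a.
Proof.
rewrite /gsum; have : a \in enum (atom T) by rewrite mem_enum.
elim: (enum (atom T)) => //= b l IH; rewrite in_cons.
case: (eqVneq a b) => [->|ne] /= Hin.
  by rewrite push_t // => x; rewrite !beval_atom.
rewrite push_f ?IH // => x; rewrite !beval_atom => /eqP ->; exact: ne.
Qed.


Local Notation "e ⊕[ r , s ] f" := (EChoice e r s f) (at level 50).
Local Notation O0 := (odot T Act Out (0 : S)).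

Lemma W1 e r s : e ⊕[r, s] e ≈ odot T Act Out (r + s) ;; e. Proof. ax eqv_W1. Qed.
Lemma W2 e f r s : e ⊕[r, s] f ≈ f ⊕[s, r] e. Proof. ax eqv_W2. Qed.
Lemma W3 e f g r s t u : e ⊕[r, s] (f ⊕[t, u] g) ≈ (e ⊕[r, s * t] f) ⊕[1, s * u] g.
Proof. ax eqv_W3. Qed.
Lemma W4 e f r s u : e ⊕[r * u, s] f ≈ (odot T Act Out u ;; e) ⊕[r, s] f. Proof. ax eqv_W4. Qed.
Lemma D2 e f g r s t u : e ⊕[r, s] (f ⊕[t, u] g) ≈ e ⊕[r, 1] (f ⊕[s * t, s * u] g).
Proof. ax eqv_D2. Qed.
Lemma D3 (b : bexp) e f r s : tst b ;; (e ⊕[r, s] f) ≈ tst b ;; ((tst b ;; e) ⊕[r, s] (tst b ;; f)).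
Proof. ax eqv_D3. Qed.
Lemma S4 e f g r s : (e ⊕[r, s] f) ;; g ≈ (e ;; g) ⊕[r, s] (f ;; g). Proof. ax eqv_S4. Qed.
Lemma C2 e : O0 ;; e ≈ O0. Proof. ax eqv_C2. Qed.

Lemma W3' e f g r s : e ⊕[r, 1] (f ⊕[s, 1] g) ≈ (e ⊕[r, s] f) ⊕[1, 1] g.
Proof. by rewrite W3 !mul1r. Qed.
Lemma W4' e f s u : e ⊕[u, s] f ≈ (odot T Act Out u ;; e) ⊕[1, s] f.
Proof. by rewrite -W4 mul1r. Qed.

Lemma Z1 e : e ⊕[1, 0] E0 ≈ e.
Proof.
symmetry; transitivity (odot T Act Out 1 ;; e).
  by rewrite -[X in X ≈ _]one_seq; apply: eqv_seq => //; symmetry; ax eqv_C1.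
by rewrite /odot S4 one_seq zero_seq.
Qed.
Lemma Z2 e f : e ⊕[1, 0] f ≈ O0 ⊕[1, 1] e.
Proof. by rewrite W2 W4' C2. Qed.
Lemma Z3 e f : e ⊕[1, 0] f ≈ e.
Proof. by rewrite Z2 -(Z2 e E0) Z1. Qed.
Lemma Z4 e : O0 ⊕[1, 1] e ≈ e.
Proof. by rewrite -(Z2 e E0) Z3. Qed.
Lemma Zero t w : t ⊕[0, 1] w ≈ w.
Proof. by rewrite W4' C2 Z4. Qed.
Lemma Swap t1 t2 r1 r2 w : t1 ⊕[r1, 1] (t2 ⊕[r2, 1] w) ≈ t2 ⊕[r2, 1] (t1 ⊕[r1, 1] w).
Proof. by rewrite W3' (W3' t2) (W2 t1 t2). Qed.
Lemma Merge t r1 r2 w : t ⊕[r1, 1] (t ⊕[r2, 1] w) ≈ t ⊕[r1 + r2, 1] w.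
Proof. by rewrite W3' W1 -W4'. Qed.
Lemma Push Y s r t a W : Y ⊕[s, r] (t ⊕[a, 1] W) ≈ t ⊕[r * a, 1] (Y ⊕[s, r] W).
Proof. by rewrite D2 W3 !mul1r mulr1 (W2 Y t); symmetry; rewrite W3 !mul1r. Qed.
Lemma PushNil Y s r : Y ⊕[s, r] O0 ≈ Y ⊕[s, 1] O0.
Proof. by rewrite /odot D2 !mulr0. Qed.

Fixpoint wsumT (l : seq (S * exp)) (tl : exp) : exp :=
  match l with [::] => tl | (r, t) :: l' => EChoice t r 1 (wsumT l' tl) end.

Lemma wsumT_nil l : wsumT l O0 = wsumE l.
Proof. by elim: l => // [[r t] l] /= ->. Qed.
Lemma wsumT_cat l1 l2 tl : wsumT (l1 ++ l2) tl = wsumT l1 (wsumT l2 tl).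
Proof. by elim: l1 => // [[r t] l] /= ->. Qed.
Lemma wsumE_cat l1 l2 : wsumE (l1 ++ l2) = wsumT l1 (wsumE l2).
Proof. by rewrite -wsumT_nil wsumT_cat wsumT_nil. Qed.
Lemma wsumT_congr l x y : x ≈ y -> wsumT l x ≈ wsumT l y.
Proof. by elim: l => // [[r t] l] /= IH H; rewrite IH. Qed.

Definition scale (X : Type) (r : S) (l : seq (S * X)) : seq (S * X) := [seq (r * p.1, p.2) | p <- l].

Lemma PushL Y s r l tl : Y ⊕[s, r] wsumT l tl ≈ wsumT (scale r l) (Y ⊕[s, r] tl).
Proof. by elim: l => // [[a t] l] /= IH; rewrite Push IH. Qed.

Lemma ScaleL s l : wsumE l ⊕[s, 1] O0 ≈ wsumE (scale s l).
Proof.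
rewrite W2 -wsumT_nil PushL -wsumT_nil; apply: wsumT_congr.
by rewrite PushNil Z4.
Qed.

Lemma ChoiceL r s l1 l2 : wsumE l1 ⊕[r, s] wsumE l2 ≈ wsumE (scale r l1 ++ scale s l2).
Proof.
rewrite W2 -(wsumT_nil l1) PushL wsumE_cat; apply: wsumT_congr.
by rewrite PushNil ScaleL.
Qed.

Lemma Single e : wsumE [:: (1, e)] ≈ e.
Proof. by rewrite /= W2 Z4. Qed.

Lemma SeqL l g : wsumE l ;; g ≈ wsumE [seq (p.1, p.2 ;; g) | p <- l].
Proof. by elim: l => [|[r t] l IH] /=; rewrite ?C2 // S4 IH. Qed.

Lemma scale1 (X : Type) (l : seq (S * X)) : scale 1 l = l.
Proof. by elim: l => // [[r t] l] /= ->; rewrite mul1r. Qed.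

Lemma FlattenL (Y : Type) (l : seq (S * Y)) (h : Y -> exp) (M : Y -> seq (S * exp)) :
  (forall p, List.In p l -> h p.2 ≈ wsumE (M p.2)) ->
  wsumE [seq (p.1, h p.2) | p <- l] ≈ wsumE (flatten [seq scale p.1 (M p.2) | p <- l]).
Proof.
elim: l => // [[r t] l] IH /= H.
transitivity (wsumE (M t) ⊕[r, 1] wsumE (flatten [seq scale p.1 (M p.2) | p <- l])).
  by apply: eqv_choice; [apply: (H (r, t)); left | apply: IH => p pl; apply: H; right].
by rewrite ChoiceL scale1.
Qed.

Definition wf (X : Type) (l : seq (S * X)) (x : X) : S :=
  \sum_(p <- l) (if `[< p.2 = x >] then p.1 else 0).

Lemma wf_nil (X : Type) (x : X) : wf [::] x = 0.
Proof. by rewrite /wf big_nil. Qed.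
Lemma wf_cons (X : Type) r (t : X) l x :
  wf ((r, t) :: l) x = (if `[< t = x >] then r else 0) + wf l x.
Proof. by rewrite /wf big_cons. Qed.

Definition remx (X : Type) (x : X) (l : seq (S * X)) := [seq p <- l | ~~ `[< p.2 = x >]].

Lemma wf_remx (X : Type) (x : X) (l : seq (S * X)) y : wf (remx x l) y = if `[< y = x >] then 0 else wf l y.
Proof.
elim: l => [|[r t] l IH] /=; first by rewrite wf_nil; case: ifP.
case: (asboolP (t = x)) => [Htx|Htx] /=.
  rewrite IH wf_cons; case: (asboolP (y = x)) => // Hyx.
  by rewrite asboolF ?add0r // => Hty; apply: Hyx; rewrite -Hty.
rewrite !wf_cons IH; case: (asboolP (y = x)) => // Hyx.
by rewrite asboolF ?add0r // => Hty; apply: Htx; rewrite Hty.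
Qed.

Lemma Extract x l : wsumE l ≈ x ⊕[wf l x, 1] wsumE (remx x l).
Proof.
elim: l => [|[r t] l IH] /=; first by rewrite wf_nil Zero.
rewrite wf_cons; case: (pselect (t = x)) => [Htx|ne].
  by subst x; rewrite asboolT //= IH Merge.
by rewrite asboolF //= add0r IH Swap.
Qed.

Lemma size_remx (X : Type) (x : X) (l : seq (S * X)) : (size (remx x l) <= size l)%N.
Proof. by rewrite size_filter count_size. Qed.

Lemma Canon l1 l2 : wf l1 =1 wf l2 -> wsumE l1 ≈ wsumE l2.
Proof.
have [n] := ubnP (size l1 + size l2).
elim: n l1 l2 => // n IH l1 l2 Hs H.
have key : forall x, (size (remx x l1) + size (remx x l2) < n)%N -> wsumE l1 ≈ wsumE l2.
  move=> x Hs'; rewrite (Extract x l1) (Extract x l2) H.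
  apply: eqv_choice => //; apply: IH => // y; rewrite !wf_remx H //.
have h1 := size_remx; move: Hs H key.
case: l1 => [|[r t] l1]; case: l2 => [|[r' t'] l2] //= Hs H key.
- apply: (key t') => //=; rewrite asboolT //=.
  by move: (h1 _ t' l2) Hs; rewrite !add0n ltnS; apply: leq_ltn_trans.
- apply: (key t) => //=; rewrite asboolT //= addn0.
  by move: (h1 _ t l1) Hs; rewrite !addn0 ltnS; apply: leq_ltn_trans.
- apply: (key t) => //=; rewrite asboolT //=.
  have := h1 _ t l1; have := h1 _ t ((r', t') :: l2) => /= h2 h3.
  move: Hs; rewrite addSn ltnS => Hs.
  by apply: leq_trans Hs; apply: leq_add.
Qed.

Lemma GuardL (b : bexp) (Y : Type) (l : seq (S * Y)) (h g : Y -> exp) :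
  (forall p, List.In p l -> tst b ;; h p.2 ≈ tst b ;; g p.2) ->
  tst b ;; wsumE [seq (p.1, h p.2) | p <- l] ≈ tst b ;; wsumE [seq (p.1, g p.2) | p <- l].
Proof.
elim: l => // [[r t] l] IH H /=.
rewrite D3 [X in _ ≈ X]D3; apply: eqv_seq => //; apply: eqv_choice.
  by apply: (H (r, t)); left.
by apply: IH => p pl; apply: H; right.
Qed.

Lemma MapL (Y : Type) (l : seq (S * Y)) (h g : Y -> exp) :
  (forall p, List.In p l -> h p.2 ≈ g p.2) ->
  wsumE [seq (p.1, h p.2) | p <- l] ≈ wsumE [seq (p.1, g p.2) | p <- l].
Proof.
elim: l => // [[r t] l] IH H /=; apply: eqv_choice.
  by apply: (H (r, t)); left.
by apply: IH => p pl; apply: H; right.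
Qed.




Local Notation obsx := (obs Act Out exp).
Local Notation EA p := (@EAct T Act Out S p).
Local Notation ER v := (@ERet T Act Out S v).

Definition obsE (o : obsx) : exp :=
  match o with Acc => E1 | Rej => E0 | Ret v => ER v | Tr p e' => EA p ;; e' end.

Lemma obsE_inj : injective obsE.
Proof. by case=> [||v|p e] [||v'|p' e'] //= => [[->]|[-> ->]]. Qed.

Definition mo (L : seq (S * obsx)) := [seq (p.1, obsE p.2) | p <- L].
Definition wsumO L := wsumE (mo L).

Lemma wf_map (X Y : Type) (h : X -> Y) (L : seq (S * X)) y :
  wf [seq (p.1, h p.2) | p <- L] y = \sum_(p <- L) (if `[< h p.2 = y >] then p.1 else 0).
Proof. by rewrite /wf big_map. Qed.

Lemma wf_map_inj (X Y : Type) (h : X -> Y) L x : injective h ->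
  wf [seq (p.1, h p.2) | p <- L] (h x) = wf L x.
Proof.
move=> hi; rewrite wf_map /wf; apply: eq_bigr => p _; congr (if _ then _ else _).
by apply: asbool_equiv_eq; split=> [/hi|->].
Qed.

Lemma wf_map_out (X Y : Type) (h : X -> Y) L y : (forall x, h x <> y) ->
  wf [seq (p.1, h p.2) | p <- L] y = 0.
Proof. by move=> H; rewrite wf_map big1 // => p _; rewrite asboolF. Qed.

Lemma wf_mapE (X Y : Type) (h : X -> Y) L1 L2 : injective h -> wf L1 =1 wf L2 ->
  wf [seq (p.1, h p.2) | p <- L1] =1 wf [seq (p.1, h p.2) | p <- L2].
Proof.
move=> hi H y; case: (pselect (exists x, h x = y)) => [[x <-]|N].
  by rewrite !wf_map_inj.
by rewrite !wf_map_out // => x hx; apply: N; exists x.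
Qed.

Lemma CanonO L1 L2 : wf L1 =1 wf L2 -> wsumO L1 ≈ wsumO L2.
Proof. by move=> H; apply: Canon; apply: wf_mapE => //; exact: obsE_inj. Qed.

Lemma wf_cat (X : Type) (L1 L2 : seq (S * X)) x : wf (L1 ++ L2) x = wf L1 x + wf L2 x.
Proof. by rewrite /wf big_cat. Qed.
Lemma wf_scale (X : Type) r (L : seq (S * X)) x : wf (scale r L) x = r * wf L x.
Proof.
rewrite /wf big_map big_distrr /=; apply: eq_bigr => p _.
by case: ifP; rewrite ?mulr0.
Qed.
Lemma wf_flatten (X Y : Type) (L : seq (S * X)) (M : X -> seq (S * Y)) y :
  wf (flatten [seq scale p.1 (M p.2) | p <- L]) y = \sum_(p <- L) p.1 * wf (M p.2) y.
Proof.
elim: L => [|p L IH] /=; first by rewrite wf_nil big_nil.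
by rewrite wf_cat IH big_cons wf_scale.
Qed.
Lemma wf_single (X : Type) (o x : X) : wf [:: (1, o)] x = if `[< x = o >] then 1 else 0.
Proof.
rewrite wf_cons wf_nil addr0; congr (if _ then _ else _).
by apply: asbool_equiv_eq; split=> ->.
Qed.

Lemma wf_notin (L : seq (S * obsx)) (i : {classic obsx}) :
  i \notin [seq (p.2 : {classic obsx}) | p <- L] -> wf L i = 0.
Proof.
elim: L => [|[q o] L IH] /=; first by rewrite wf_nil.
rewrite in_cons negb_or => /andP[ne /IH IH']; rewrite wf_cons IH' addr0 asboolF //.
by move=> E; move/eqP: ne; apply; rewrite E.
Qed.

Lemma sum_pick (r : seq {classic obsx}) (o : obsx) (q : S) (F : obsx -> S) :
  uniq r -> (o : {classic obsx}) \in r ->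
  \sum_(i <- r) (if `[< o = i >] then q else 0) * F i = q * F o.
Proof.
move=> ur oi; rewrite (bigD1_seq (o : {classic obsx})) //= asboolT // big1 ?addr0 //.
by move=> i /eqP ne; rewrite asboolF ?mul0r // => E; apply: ne; rewrite E.
Qed.

Lemma SumL_seq (L : seq (S * obsx)) (r : seq {classic obsx}) (F : obsx -> S) :
  uniq r -> (forall p, List.In p L -> (p.2 : {classic obsx}) \in r) ->
  \sum_(i <- r) wf L i * F i = \sum_(p <- L) p.1 * F p.2.
Proof.
move=> ur; elim: L => [|[q o] L IH] H.
  by rewrite big_nil big1 // => i _; rewrite wf_nil mul0r.
rewrite big_cons -IH; last by move=> p pL; apply: H; right.
under eq_bigr do rewrite wf_cons mulrDl.
by rewrite big_split /= sum_pick //; apply: (H (q, o)); left.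
Qed.

Lemma SumL (L : seq (S * obsx)) (F : obsx -> S) :
  \sum_(x \in [set: {classic obsx}]) wf L x * F x = \sum_(p <- L) p.1 * F p.2.
Proof.
set r := undup [seq (p.2 : {classic obsx}) | p <- L].
rewrite (fsbigE r) ?undup_uniq //; last first.
  by move=> j _ jr; rewrite wf_notin ?mul0r // -mem_undup.
rewrite (eq_bigl xpredT) => [|i]; last by rewrite in_setT.
apply: SumL_seq; first exact: undup_uniq.
move=> p; rewrite /r mem_undup; elim: L {r} => //= q L IH [->|pL].
  by rewrite mem_head.
by rewrite in_cons IH ?orbT.
Qed.


Lemma OdotL t l : odot T Act Out t ;; wsumE l ≈ wsumE (scale t l).
Proof.
rewrite /odot S4 one_seq zero_seq -[X in _ ⊕[_, _] X](Single E0) ChoiceL.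
apply: Canon => y; rewrite wf_cat /= wf_cons wf_nil mul0r.
by case: ifP; rewrite !addr0.
Qed.

Lemma remx_in (X : Type) (x : X) l p : List.In p (remx x l) -> p.2 <> x.
Proof.
elim: l => //= q l IH; case: (asboolP (q.2 = x)) => /= [_|ne]; first exact: IH.
by case=> [<-|/IH].
Qed.

Lemma mo_scale r L : mo (scale r L) = scale r (mo L).
Proof. by elim: L => //= p L ->. Qed.
Lemma mo_cat L1 L2 : mo (L1 ++ L2) = mo L1 ++ mo L2.
Proof. exact: map_cat. Qed.
Lemma mo_flatten (Y : Type) (L : seq (S * Y)) (M : Y -> seq (S * obsx)) :
  mo (flatten [seq scale p.1 (M p.2) | p <- L]) = flatten [seq scale p.1 (mo (M p.2)) | p <- L].
Proof. by elim: L => //= p L IH; rewrite mo_cat mo_scale IH. Qed.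

Lemma SingleO o : wsumO [:: (1, o)] ≈ obsE o.
Proof. exact: Single. Qed.

Lemma wf_dirac (o : obsx) : wf [:: (1, o)] =1 @dirac S _ o.
Proof. by move=> y; rewrite wf_single. Qed.

Local Notation at_ a := (tst (atom_test a)).

Lemma at_tst (a : atom T) (b : bexp) : at_ a ;; tst b ≈ at_ a ;; obsE (if ale a b then Acc else Rej).
Proof.
transitivity (tst (BAnd (atom_test a) b)); first by ax eqv_S7.
symmetry; case Hab: (ale a b) => /=.
  transitivity (tst (BAnd (atom_test a) (BOne T))); first by ax eqv_S7.
  apply: tst_eq => x /=; rewrite beval_atom; case: eqP => //= ->.
  by rewrite /ale in Hab; rewrite Hab.
transitivity (tst (BAnd (atom_test a) (BZero T))); first by ax eqv_S7.
apply: tst_eq => x /=; rewrite beval_atom; case: eqP => //= ->.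
by rewrite /ale in Hab; rewrite Hab.
Qed.

Definition contL (L2 : seq (S * obsx)) (e2 : exp) (x : obsx) : seq (S * obsx) :=
  match x with
  | Acc => L2 | Rej => [:: (1, Rej)] | Ret v => [:: (1, Ret v)]
  | Tr p e' => [:: (1, Tr p (e' ;; e2))]
  end.

Definition loopmap (lp : exp) (o : obsx) : obsx :=
  match o with Tr p e' => Tr p (e' ;; lp) | Acc => Acc | Rej => Rej | Ret v => Ret v end.

Lemma loopmap_inj lp : injective (loopmap lp).
Proof. by case=> [||v|p e] [||v'|p' e'] //= [-> ->]. Qed.

Theorem FT e (a : atom T) : exists L, wf L =1 @Defs.deriv T Act Out S star e a /\ at_ a ;; e ≈ at_ a ;; wsumO L.
Proof.
elim: e.
- move=> p; exists [:: (1, Tr p E1)]; split; first exact: wf_dirac.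
  by apply: eqv_seq => //; rewrite SingleO /= seq_one.
- move=> b; exists [:: (1, if ale a b then Acc else Rej)]; split.
    by move=> y; rewrite wf_dirac.
  by rewrite SingleO at_tst.
- move=> e1 [L1 [H1 E1']] b e2 [L2 [H2 E2']].
  case Hb: (ale a b).
  + exists L1; split; first by move=> y /=; rewrite Hb.
    rewrite push_t // => x; rewrite beval_atom => /eqP ->; exact: Hb.
  + exists L2; split; first by move=> y /=; rewrite Hb.
    rewrite push_f // => x; rewrite beval_atom => /eqP ->; rewrite /ale in Hb; by rewrite Hb.
- move=> e1 [L1 [H1 E1']] e2 [L2 [H2 E2']].
  exists (flatten [seq scale p.1 (contL L2 e2 p.2) | p <- L1]); split.
    move=> y /=; rewrite wf_flatten.
    rewrite (eq_fsbigr (fun x : {classic obsx} => wf L1 x * wf (contL L2 e2 x) y)); last first.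
      move=> x _; rewrite H1; congr (_ * _); case: x => [||v|p e'] //=; rewrite ?wf_dirac //.
    by rewrite SumL.
  rewrite -seqA E1' seqA /wsumO SeqL.
  have -> : [seq (p.1, p.2 ;; e2) | p <- mo L1] = [seq (p.1, obsE p.2 ;; e2) | p <- L1].
    by rewrite /mo -map_comp.
  transitivity (at_ a ;; wsumE [seq (p.1, wsumO (contL L2 e2 p.2)) | p <- L1]).
    apply: (GuardL (h := fun o => obsE o ;; e2) (g := fun o => wsumO (contL L2 e2 o))) => [[r o]] _ /=.
    case: o => [||v|p e'] /=.
    * by rewrite one_seq E2'.
    * by rewrite zero_seq SingleO.
    * by rewrite SingleO /=; apply: eqv_seq => //; ax eqv_S6.
    * by rewrite SingleO seqA.
  apply: eqv_seq => //; rewrite /wsumO mo_flatten; by apply: (FlattenL (h := fun o => wsumO (contL L2 e2 o)) (M := fun o => mo (contL L2 e2 o))) => p _.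
- move=> e1 [L1 [H1 E1']] b.
  case Hb: (ale a b); last first.
    exists [:: (1, Acc)]; split.
      move=> y /=; rewrite Hb wf_single; case: y => [||v|p g] /=; [rewrite asboolT|rewrite asboolF|rewrite asboolF|rewrite asboolF] => //; congruence.
    rewrite SingleO.
    transitivity (at_ a ;; EIf (e1 ;; ELoop e1 b) b E1); first by apply: eqv_seq => //; ax eqv_L1.
    rewrite push_f // => x; rewrite beval_atom => /eqP ->; by rewrite /ale in Hb; rewrite Hb.
  set s := wf L1 Acc.
  set L1' := remx Acc L1.
  exists (scale (star s) [seq (p.1, loopmap (ELoop e1 b) p.2) | p <- L1']); split.
    move=> y; rewrite wf_scale /= Hb.
    have WI := fun x => wf_map_inj L1' x (@loopmap_inj (ELoop e1 b)).
    case: y => [||v|p g]; rewrite -?H1 -/s.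
    + by rewrite (WI Acc) /L1' wf_remx asboolT // mulr0.
    + by rewrite (WI Rej) /L1' wf_remx asboolF.
    + by rewrite (WI (Ret v)) /L1' wf_remx asboolF.
    case: (pselect (exists e', g = e' ;; ELoop e1 b)) => [[e' ->]|N].
      by rewrite (WI (Tr p e')) /L1' wf_remx asboolF /= ?asboolT ?H1 //; congruence.
    rewrite wf_map_out ?mulr0; last first.
      by case=> [||v|p' e''] //= [_ E]; apply: N; exists e''.
    case: g N => // e' k N; case: (asboolP (k = ELoop e1 b)) => // E.
    by case: N; exists e'; rewrite E.
  have HL : wf L1 =1 wf ((s, Acc) :: L1').
    move=> y; rewrite wf_cons wf_remx; case: (asboolP (y = Acc)) => [->|ne].
      by rewrite asboolT // addr0.
    by rewrite asboolF ?add0r // => E; apply: ne.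
  have Ee1 : eqv star e1 (EIf (wsumO L1' ⊕[1, s] E1) (atom_test a) e1).
    transitivity (EIf e1 (atom_test a) e1); first by rewrite G1.
    by apply: if_then; rewrite E1' (CanonO HL) /wsumO /= W2.
  have EL := eqv_L2 b Ee1; rewrite mulr1 in EL.
  rewrite EL push_t; last by move=> x; rewrite beval_atom => /eqP ->.
  apply: eqv_seq => //.
  rewrite /wsumO SeqL.
  have -> : [seq (p.1, p.2 ;; ELoop e1 b) | p <- mo L1'] = [seq (p.1, obsE p.2 ;; ELoop e1 b) | p <- L1'].
    by rewrite /mo -map_comp.
  transitivity (odot T Act Out (star s) ;; wsumE [seq (p.1, obsE (loopmap (ELoop e1 b) p.2)) | p <- L1']); last first.
    by rewrite mo_scale OdotL /mo -map_comp.
    apply: eqv_seq => //; apply: (MapL (h := fun o => obsE o ;; ELoop e1 b) (g := fun o => obsE (loopmap (ELoop e1 b) o))).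
    move=> [r o] Hin; have := remx_in Hin; clear Hin => /=.
    case: o => [||v|p e'] ne /=.
    * by case: ne.
    * exact: zero_seq.
    * by ax eqv_S6.
    * exact: seqA.
- move=> v; exists [:: (1, Ret v)]; split; first exact: wf_dirac.
  by rewrite SingleO.
- move=> e1 [L1 [H1 E1']] r s e2 [L2 [H2 E2']].
  exists (scale r L1 ++ scale s L2); split.
    by move=> y; rewrite wf_cat !wf_scale H1 H2.
  rewrite D3 E1' E2' -D3 /wsumO mo_cat !mo_scale ChoiceL //.
Qed.


Lemma FS (Y : Type) (F : Y -> S) (P : set Y) : fin_supp F ->
  \sum_(o <- finite_support 0 [set: {classic Y}] F) (if `[< P o >] then F o else 0) =
  \sum_(o \in (P : set {classic Y})) F o.
Proof.
move=> fF; rewrite fsbig_mkcond.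
have fin : finite_set ([set: {classic Y}] `&` F @^-1` [set~ 0]).
  by rewrite setTI; exact: fF.
rewrite (fsbigE (finite_support 0 [set: {classic Y}] F)) //; last first.
  move=> i _; rewrite in_finite_support // => ni; rewrite /patch; case: ifP => // _.
  by case: (pselect (F i = 0)) => // Fi; exfalso; move/negP: ni; apply; rewrite in_setE.
rewrite (eq_bigl xpredT) => [|i]; last by rewrite in_setT.
apply: eq_bigr => i _; rewrite /patch; congr (if _ then _ else _).
Qed.

Lemma pos_big (positive : forall x y : S, x + y = 0 -> x = 0 /\ y = 0) (Y : eqType) (l : seq Y) (F : Y -> S) i :
  \sum_(j <- l) F j = 0 -> i \in l -> F i = 0.
Proof.
elim: l => // j l IH; rewrite big_cons => /positive [Fj Fl]; rewrite in_cons.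
by case/orP => [/eqP ->|]; [| exact: IH].
Qed.

Lemma pos_fsbig (positive : forall x y : S, x + y = 0 -> x = 0 /\ y = 0) (Y : Type) (F : Y -> S) (A : set Y) i :
  fin_supp F -> \sum_(j \in (A : set {classic Y})) F j = 0 -> A i -> F i = 0.
Proof.
move=> fF H Ai; case: (pselect (F i = 0)) => // Fi; exfalso.
have fin : finite_set ((A : set {classic Y}) `&` F @^-1` [set~ 0]).
  by apply: sub_finite_set fF => y [].
have : (i : {classic Y}) \in finite_support 0 (A : set {classic Y}) F.
  by rewrite in_finite_support // in_setE.
by move/(pos_big positive H).
Qed.


Local Notation der := (@Defs.deriv T Act Out S star).

Lemma seq_zero x1 x2 a p y : der x2 a (Tr p y) = 0 ->
  (forall x', y = x' ;; x2 -> der x1 a (Tr p x') = 0) -> der (x1 ;; x2) a (Tr p y) = 0.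
Proof.
move=> H2 H1 /=; apply: fsbig1 => o _; case: o => [||v|p' x'] /=.
- by rewrite H2 mulr0.
- by rewrite /dirac asboolF ?mulr0.
- by rewrite /dirac asboolF ?mulr0.
rewrite /dirac; case: (asboolP (Tr p y = Tr p' (x' ;; x2))) => [[E1' E2']|_]; last by rewrite mulr0.
by subst; rewrite H1 ?mul0r.
Qed.

Lemma seq_succ x1 x2 a p y : der (x1 ;; x2) a (Tr p y) <> 0 ->
  der x2 a (Tr p y) <> 0 \/ exists x', y = x' ;; x2 /\ der x1 a (Tr p x') <> 0.
Proof.
move=> H; case: (pselect (der x2 a (Tr p y) = 0)) => [H2|H2]; last by left.
right; apply: contra_notP H => N; apply: seq_zero => // x' E.
case: (pselect (der x1 a (Tr p x') = 0)) => // Hn; exfalso; apply: N; exists x'; split => //.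
Qed.

Lemma loop_succ e1 b a p y : der (ELoop e1 b) a (Tr p y) <> 0 ->
  exists x', y = x' ;; ELoop e1 b /\ der e1 a (Tr p x') <> 0.
Proof.
rewrite /=; case: ifP => _; last by [].
case: y => // e' k; case: (asboolP (k = ELoop e1 b)) => [->|] // H.
exists e'; split => // H'; apply: H; by rewrite H' mulr0.
Qed.

Lemma choice_succ e1 r s e2 a o : der (EChoice e1 r s e2) a o <> 0 ->
  der e1 a o <> 0 \/ der e2 a o <> 0.
Proof.
move=> /= H; case: (pselect (der e1 a o = 0)) => [H1|]; last by left.
by right => H2; apply: H; rewrite H1 H2 !mulr0 addr0.
Qed.

Fixpoint dclos (e : exp) : seq exp :=
  match e with
  | EAct p => [:: EA p; E1]
  | ETest b => [:: tst b]
  | ERet v => [:: ER v]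
  | EIf e1 b e2 => EIf e1 b e2 :: dclos e1 ++ dclos e2
  | EChoice e1 r s e2 => EChoice e1 r s e2 :: dclos e1 ++ dclos e2
  | ESeq e1 e2 => [seq x ;; e2 | x <- dclos e1] ++ dclos e2
  | ELoop e1 b => ELoop e1 b :: [seq x ;; ELoop e1 b | x <- dclos e1]
  end.

Lemma In_map (A B : Type) (f : A -> B) (l : seq A) y :
  List.In y (map f l) <-> exists x, List.In x l /\ y = f x.
Proof.
elim: l y => [|x l IH] y /=; first by split=> // [[]] x [].
split.
  case=> [<-|H]; first by exists x; split; [left|].
  by case: (proj1 (IH _) H) => x' [H' ->]; exists x'; split; [right|].
case=> x' [[<-|H] ->]; first by left.
by right; apply: (proj2 (IH _)); exists x'.
Qed.

Lemma In_cat (A : Type) (l1 l2 : seq A) y : List.In y (l1 ++ l2) <-> List.In y l1 \/ List.In y l2.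
Proof. exact: List.in_app_iff. Qed.

Lemma dclos_self e : List.In e (dclos e).
Proof.
case: e => //=; try by left.
move=> e1 e2; apply/In_cat; left; apply/In_map; exists e1; split => //.
elim: e1 {e2} => //=; try by left.
move=> e1 IH e2 _; apply/In_cat; left; apply/In_map; exists e1; split => //.
Qed.

Lemma dirac_nz (Y : Type) (z w : Y) : @dirac S Y z w <> 0 -> w = z.
Proof. by rewrite /dirac; case: (asboolP (w = z)). Qed.

Lemma dclos_closed e x : List.In x (dclos e) ->
  forall a p y, der x a (Tr p y) <> 0 -> List.In y (dclos e).
Proof.
elim: e x => [p|b|e1 IH1 b e2 IH2|e1 IH1 e2 IH2|e1 IH1 b|v|e1 IH1 r s e2 IH2] x /= Hx a q y.
- case: Hx => [<-|[<-|[]]] /= Hd; have := dirac_nz Hd; first by move=> [_ ->]; right; left.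
  by move=> E; discriminate E.
- by case: Hx => [<-|[]] /= Hd; have := dirac_nz Hd; case: (ale a b) => E; discriminate E.
- case: Hx => [<-|/In_cat [H|H]] => [/=|Hd|Hd]; last first.
  + by right; apply/In_cat; right; apply: IH2 Hd.
  + by right; apply/In_cat; left; apply: IH1 Hd.
  case: ifP => _ Hd; right; apply/In_cat; [left; apply: IH1 Hd | right; apply: IH2 Hd]; exact: dclos_self.
- case/In_cat: Hx => [/In_map [x1 [H1 ->]]|H2] Hd; last by apply/In_cat; right; apply: IH2 Hd.
  case/seq_succ: Hd => [Hd|[x' [-> Hd]]]; first by apply/In_cat; right; apply: (IH2 e2 (dclos_self e2) a q).
  apply/In_cat; left; apply/In_map; exists x'; split => //; exact: IH1 Hd.
- have Hself : forall y, der (ELoop e1 b) a (Tr q y) <> 0 -> List.In y (ELoop e1 b :: [seq x ;; ELoop e1 b | x <- dclos e1]).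
    move=> y' /loop_succ [x' [-> Hd]]; right; apply/In_map; exists x'; split => //.
    exact: (IH1 e1 (dclos_self e1) a q).
  case: Hx => [<-|/In_map [x1 [H1 ->]]]; first exact: Hself.
  case/seq_succ => [Hd|[x' [-> Hd]]]; first exact: Hself.
  right; apply/In_map; exists x'; split => //; exact: IH1 Hd.
- by case: Hx => [<-|[]] /= Hd; have := dirac_nz Hd.
- case: Hx => [<-|/In_cat [H|H]] => [Hd|Hd|Hd].
  + case/choice_succ: Hd => Hd; right; apply/In_cat; [left; apply: IH1 Hd | right; apply: IH2 Hd]; exact: dclos_self.
  + by right; apply/In_cat; left; apply: IH1 Hd.
  + by right; apply/In_cat; right; apply: IH2 Hd.
Qed.


Section Sol.
Variables (Z : Type) (rho : wautomaton T Act Out S Z) (Hfin : is_wautomaton rho).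
Variables (X : finType) (toX : Z -> X) (vX : X -> Z).
Local Notation obsz := (obs Act Out Z).

Definition sl (z : Z) (a : atom T) : seq {classic obsz} :=
  finite_support 0 [set: {classic obsz}] (rho z a).

Definition summ (o : obsz) : summand T Act Out S X :=
  match o with
  | Acc => SExp X E1 | Rej => SExp X E0 | Ret v => SExp X (ER v)
  | Tr p z' => SVar (EA p) (toX z')
  end.

Definition tau (x : X) : term T Act Out S X :=
  fun a => [seq (rho (vX x) a o, summ o) | o <- sl (vX x) a].

Lemma tau_salomaa : salomaa tau.
Proof.
move=> x a r g y /In_map [o [_ E]] a'; case: o E => //= p z' [_ -> _] //.
Qed.

Hypothesis Hcl : forall x a p z', rho (vX x) a (Tr p z') <> 0 -> vX (toX z') = z'.
Variable pr : Z -> exp.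
Hypothesis Hhom : homomorphism rho der pr.

Definition omap (o : obsz) : obsx :=
  match o with Acc => Acc | Rej => Rej | Ret v => Ret v | Tr p z' => Tr p (pr z') end.

Lemma tau_sol x : eqv star (pr (vX x)) (hsharp (fun x => pr (vX x)) (tau x)).
Proof.
apply: atomwise => a; rewrite /hsharp gsum_at.
have [L [HL EL]] := FT (pr (vX x)) a.
rewrite EL; apply: eqv_seq => //; apply: Canon => y.
rewrite [in RHS]/wf !big_map /=.
have -> : \sum_(j <- sl (vX x) a) (if `[< inst (fun x0 => pr (vX x0)) (summ j) = y >] then rho (vX x) a j else 0)
   = \sum_(j <- sl (vX x) a) (if `[< obsE (omap j) = y >] then rho (vX x) a j else 0).
  apply: (@eq_big_seq _ _ _ {classic obsz}) => o Ho.
  have Hnz : rho (vX x) a o <> 0.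
    move: Ho; rewrite /sl in_finite_support; first by case/set_mem => _.
    by rewrite setTI; exact: Hfin.
  case: o Ho Hnz => //= p z' _ Hnz; by rewrite (Hcl Hnz).
case: (pselect (exists o', y = obsE o')) => [[o' ->]|N]; last first.
  rewrite /mo wf_map_out; last by move=> o' E; apply: N; exists o'.
  by rewrite big1 // => o _; rewrite asboolF // => E; apply: N; exists (omap o).
rewrite /mo wf_map_inj; last exact: obsE_inj.
have -> : \sum_(j <- sl (vX x) a) (if `[< obsE (omap j) = obsE o' >] then rho (vX x) a j else 0)
  = \sum_(j <- sl (vX x) a) (if `[< omap j = o' >] then rho (vX x) a j else 0).
  apply: eq_bigr => o _; congr (if _ then _ else _); apply: asbool_equiv_eq.
  by split => [/obsE_inj|->].
rewrite (@FS _ _ (fun o => omap o = o')) ?HL; last exact: Hfin.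
have [H1 H2 H3 H4] := Hhom (vX x) a.
have base : forall (o1 : obsz), (forall o, omap o = omap o1 <-> o = o1) ->
    \sum_(o \in ((fun o => omap o = omap o1) : set {classic obsz})) rho (vX x) a o = rho (vX x) a o1.
  move=> o1 H; rewrite (_ : ((fun o => omap o = omap o1) : set {classic obsz}) = [set o1]%classic) ?fsbig_set1 //.
  by apply/funext => o; apply/propext; exact: H.
case: o' => [||v|p x'].
- by rewrite H1 (base Acc) // => o; case: o.
- by rewrite H2 (base Rej) // => o; case: o.
- by rewrite H3 (base (Ret v)) // => o; case: o => //= v'; split=> [[->]|[->]].
rewrite H4 /mass; congr (\sum_(_ \in _) _).
apply/funext => o; apply/propext; case: o => //= [||v|p' z']; try by split=> // [[x'' []]].
split=> [[x'' [[-> ->] <-]]|[-> <-]] //; by exists z'.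
Qed.


End Sol.

Lemma In_flatten (A : Type) (L : seq (seq A)) x :
  List.In x (flatten L) <-> exists l, List.In l L /\ List.In x l.
Proof.
elim: L => [|l L IH] /=; first by split=> // [[l []]].
rewrite In_cat; split.
  by case=> [H|/IH [l' [H1 H2]]]; [exists l; split; [left|] | exists l'; split; [right|]].
by case=> l' [[<-|H1] H2]; [left | right; apply/IH; exists l'].
Qed.

Lemma In_mem (A : eqType) (x : A) s : List.In x s <-> x \in s.
Proof.
elim: s => [|y s IH] //=; rewrite in_cons; split.
  by case=> [->|/IH ->]; rewrite ?eqxx ?orbT.
by case/orP => [/eqP ->|/IH]; [left | right].
Qed.

Theorem main_thm (positive : forall x y : S, x + y = 0 -> x = 0 /\ y = 0) (e f : exp) :
  bisimilar star e f -> deqv star e f.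
Proof.
case=> R [[rho [Hfin Hh1 Hh2]] Ref].
pose Z := {xy : exp * exp | R xy.1 xy.2}.
pose mkZ (x y : exp) : seq {classic Z} :=
  match pselect (R x y) with left H => [:: (exist _ (x, y) H : Z)] | right _ => [::] end.
pose PL := flatten [seq flatten [seq mkZ x y | y <- dclos f] | x <- dclos e].
have PL_in : forall z : Z, List.In (proj1_sig z).1 (dclos e) -> List.In (proj1_sig z).2 (dclos f) ->
    (z : {classic Z}) \in PL.
  case=> [[x y] Hz] /= Hx Hy; apply/In_mem/In_flatten.
  exists (flatten [seq mkZ x y | y <- dclos f]); split; first by apply/In_map; exists x.
  apply/In_flatten; exists (mkZ x y); split; first by apply/In_map; exists y.
  rewrite /mkZ; case: (pselect (R x y)) => [H|//]; left.
  by congr exist; apply: Prop_irrelevance.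
have PL_inv : forall z : Z, (z : {classic Z}) \in PL ->
    List.In (proj1_sig z).1 (dclos e) /\ List.In (proj1_sig z).2 (dclos f).
  move=> z /In_mem /In_flatten [l [/In_map [x [Hx ->]] /In_flatten [l' [/In_map [y [Hy ->]] Hz]]]].
  move: Hz; rewrite /mkZ; case: (pselect (R x y)) => // H [] // <- //.
pose z0 : Z := exist _ (e, f) Ref.
have z0in : (z0 : {classic Z}) \in PL by apply: PL_in; exact: dclos_self.
pose X := seq_sub PL.
pose x0 : X := SeqSub z0in.
pose toX (z : Z) : X := insubd x0 (z : {classic Z}).
pose vX (x : X) : Z := ssval x.
have Hcl : forall x a p z', rho (vX x) a (Tr p z') <> 0 -> vX (toX z') = z'.
  move=> x a p z' Hnz.
  have [Hxe Hxf] := PL_inv (vX x) (ssvalP x).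
  have step : forall (pr : Z -> exp), homomorphism rho der pr ->
      der (pr (vX x)) a (Tr p (pr z')) <> 0.
    move=> pr Hh Hd; apply: Hnz; have [_ _ _ H4] := Hh (vX x) a.
    rewrite H4 /mass in Hd; apply: (pos_fsbig positive (Hfin (vX x) a) Hd).
    by exists z'.
  rewrite /vX /toX val_insubd; case: ifP => // /negP []; apply: PL_in.
  - exact: (dclos_closed Hxe (step _ Hh1)).
  - exact: (dclos_closed Hxf (step _ Hh2)).
have U := @deqv_UA T Act Out S star X (tau rho toX vX)
   (fun x => (proj1_sig (vX x)).1) (fun x => (proj1_sig (vX x)).2).
apply: (U _ _ _ x0).
- by move=> x a r g y; apply: tau_salomaa.
- by move=> x; apply: deqv_base; apply: (tau_sol Hfin Hcl Hh1).
- by move=> x; apply: deqv_base; apply: (tau_sol Hfin Hcl Hh2).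
Qed.

End Part.

Theorem mainTheorem11 (T : finType) (Act Out : Type) (S : pzSemiRingType)
  (star : S -> S)
  (positive : forall x y : S, x + y = 0 -> x = 0 /\ y = 0)
  (refinement : forall x y z w : S, x + y = z + w ->
     exists s t u v : S, [/\ s + t = x, s + u = z, u + v = y & t + v = w])
  (conway_sum : forall a b : S, star (a + b) = star a * star (b * star a))
  (conway_prod : forall a b : S, star (a * b) = 1 + a * star (b * a) * b)
  (e f : exp T Act Out S) :
  bisimilar star e f -> deqv star e f.
Proof.
exact: (@main_thm T Act Out S star positive e f).
Qed.
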